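(* Let $r\ge2$ be an integer, $m,\ell$ positive integers with $r<2^m$, let $\alpha_0$ be a real number with $\alpha_0\in(-r/2,r/2]$, and let $B$ be an integer with $1\le B<B_{\max}=(2^{m+\ell}/r-1)/2$. Then $$\sum_{t=-B}^{B}P(\alpha_0+rt)\ \ge\ \frac1r\left(1-\frac{1}{\pi^2}\left(\frac{2}{B}+\frac{1}{B^2}+\frac{1}{3B^3}\right)\right)-\frac{\pi^2(2B+1)}{2^{m+\ell}}.$$
   Context: Let $\beta=2^{m+\ell}\bmod r$ and $L=\lfloor 2^{m+\ell}/r\rfloor$. For real $\alpha$ not a multiple of $2^{m+\ell}$, $$P(\alpha)=\frac{\beta}{2^{2(m+\ell)}}\cdot\frac{1-\cos(2\pi\alpha(L+1)/2^{m+\ell})}{1-\cos(2\pi\alpha/2^{m+\ell})}+\frac{r-\beta}{2^{2(m+\ell)}}\cdot\frac{1-\cos(2\pi\alpha L/2^{m+\ell})}{1-\cos(2\pi\alpha/2^{m+\ell})},$$ and $P(0)=(L^2r+(2L+1)\beta)/2^{2(m+\ell)}$. *)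

(* Defs.v *)
From Stdlib Require Import Reals Lra Lia ZArith Arith Classical ClassicalDescription.
Open Scope R_scope.

Definition Qn (m l : nat) : R := 2 ^ (m + l).

Definition betan (r m l : nat) : nat := Nat.modulo (Nat.pow 2 (m + l)) r.
Definition Ln (r m l : nat) : nat := Nat.div (Nat.pow 2 (m + l)) r.

Definition multQ (m l : nat) (alpha : R) : Prop :=
  exists k : Z, alpha = IZR k * Qn m l.

(* P(alpha) from the paper; at multiples of 2^(m+l) it takes the value P(0)
   (its continuous / periodic extension). *)
Definition P (r m l : nat) (alpha : R) : R :=
  let Q := Qn m l in
  let beta := INR (betan r m l) in
  let L := INR (Ln r m l) in
  if excluded_middle_informative (multQ m l alpha) then
    (L ^ 2 * INR r + (2 * L + 1) * beta) / Q ^ 2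
  else
    beta / Q ^ 2 * ((1 - cos (2 * PI * alpha * (L + 1) / Q)) / (1 - cos (2 * PI * alpha / Q)))
    + (INR r - beta) / Q ^ 2 * ((1 - cos (2 * PI * alpha * L / Q)) / (1 - cos (2 * PI * alpha / Q))).

(* Main.v *)
Require Import Defs.
From Stdlib Require Import Reals Lra Lia ZArith ClassicalDescription.
Open Scope R_scope.

Lemma sin_lb_eq a : sin_lb a = a - a^3/6 + a^5/120 - a^7/5040.
Proof. unfold sin_lb, sin_approx, sin_term. simpl. unfold INR; simpl. field. Qed.
Lemma Rabs_le_inv a b : Rabs a <= b -> -b <= a <= b.
Proof. unfold Rabs; destruct (Rcase_abs a); intros; lra. Qed.
Lemma PI_gt3 : 3 < PI. Proof. generalize PI2_3_2; lra. Qed.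
Lemma sin_lb3 a : 0 <= a -> a <= PI -> a - a^3/6 <= sin a.
Proof. intros. generalize PI_4; intro. destruct (SIN a H H0) as [H2 _]. rewrite sin_lb_eq in H2.
 assert (a^5/120 - a^7/5040 >= 0). { assert (0 <= a^5) by (apply pow_le; lra).
 replace (a^5/120 - a^7/5040) with (a^5 * (42 - a*a)/5040) by (simpl; field).
 apply Rle_ge. apply Rmult_le_pos; try lra. apply Rmult_le_pos; nra. }
 lra. Qed.
Lemma sin_abs_pos u : 0 <= u -> Rabs (sin u) <= u.
Proof. intros. destruct (Req_dec u 0). subst. rewrite sin_0, Rabs_R0; lra.
 generalize (sin_lt_x u ltac:(lra)); intro. generalize (SIN_bound u); intro.
 generalize PI_gt3; intro.
 apply Rabs_le. split; try lra.
 destruct (Rle_lt_dec 1 u). lra. assert (0 < sin u) by (apply sin_gt_0; lra). lra. Qed.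
Lemma sin_abs u : Rabs (sin u) <= Rabs u.
Proof. destruct (Rle_lt_dec 0 u). rewrite (Rabs_right u) by lra. apply sin_abs_pos; lra.
 rewrite (Rabs_left u) by lra. rewrite <- (Rabs_Ropp (sin u)), <- sin_neg.
 apply sin_abs_pos; lra. Qed.
Lemma sin2_le u : sin u ^ 2 <= u ^ 2.
Proof. generalize (sin_abs u); intro. rewrite <- (pow2_abs (sin u)), <- (pow2_abs u).
 generalize (Rabs_pos (sin u)); intro. nra. Qed.
Lemma sin_minus_x_pos y : 0 <= y -> y <= PI -> Rabs (sin y - y) <= y^2.
Proof. intros. generalize (sin_lb3 y H H0); intro. generalize (sin_abs_pos y H); intro.
 generalize PI_4; intro. apply Rabs_le_inv in H2. apply Rabs_le. split; [|nra].
 assert (y^3/6 <= y^2) by (simpl; nra). lra. Qed.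
Lemma sin_minus_x y : Rabs y <= PI -> Rabs (sin y - y) <= y^2.
Proof. intros. destruct (Rle_lt_dec 0 y). rewrite Rabs_right in H by lra. apply sin_minus_x_pos; lra.
 rewrite Rabs_left in H by lra.
 replace (sin y - y) with (- (sin (-y) - (- y))) by (rewrite sin_neg; ring). rewrite Rabs_Ropp.
 replace (y^2) with ((-y)^2) by ring. apply sin_minus_x_pos; lra. Qed.
Lemma sin2_shift c d : Rabs d <= PI/2 -> sin (c + d) ^ 2 >= sin c ^ 2 + sin (2*c) * d - 3 * d^2.
Proof. intros.
 assert (E : sin (c+d)^2 - sin c ^2 = sin (2*c) * (sin d * cos d) + cos (2*c) * sin d ^2).
 { rewrite sin_plus, sin_2a, cos_2a. generalize (sin2_cos2 d); generalize (sin2_cos2 c); unfold Rsqr; intros. nra. }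
 assert (H1: Rabs (sin (2*d) - 2*d) <= (2*d)^2). { apply sin_minus_x. rewrite Rabs_mult, Rabs_right by lra. lra. }
 rewrite sin_2a in H1. apply Rabs_le_inv in H1.
 generalize (SIN_bound (2*c)); generalize (COS_bound (2*c)); generalize (sin2_le d); intros.
 assert (0 <= sin d ^ 2) by nra.
 set (S := sin (2*c)) in *. set (C := cos (2*c)) in *. set (e := sin d * cos d - d).
 assert (-2*d^2 <= e <= 2*d^2) by (unfold e; nra).
 assert (S * e >= -2 * d^2) by nra.
 assert (C * sin d ^2 >= - d^2) by nra.
 replace (sin d * cos d) with (e + d) in E by (unfold e; ring). nra. Qed.
Lemma inv_sin2 u : 0 < Rabs u -> Rabs u <= PI/2 -> 1 / sin u ^ 2 <= 1 / u^2 + 10.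
Proof. intros. generalize PI_4; intro.
 assert (Hs: sin u ^ 2 = sin (Rabs u) ^2).
 { destruct (Rle_lt_dec 0 u). rewrite Rabs_right by lra; auto. rewrite Rabs_left by lra. rewrite sin_neg. ring. }
 assert (Hu: u ^2 = Rabs u ^2) by (rewrite pow2_abs; auto).
 rewrite Hs, Hu. set (a := Rabs u) in *. clearbody a.
 generalize (sin_lb3 a ltac:(lra) ltac:(lra)); intro.
 assert (0 <= a - a^3/6) by (simpl; nra).
 assert ((a - a^3/6)^2 <= sin a ^2) by nra.
 assert ((a - a^3/6)^2 * (1 + 10*a^2) >= a^2).
 { replace ((a - a^3/6)^2) with (a^2 * (1 - a^2/6)^2) by field.
   assert (a^2 <= 4) by nra. assert (0 < a^2) by nra.
   assert ((1 - a^2/6)^2 * (1 + 10*a^2) >= 1) by nra. nra. }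
 assert (0 < sin a ^2) by (simpl; nra). assert (0 < a^2) by nra.
 replace (1 / a^2 + 10) with ((1 + 10 * a^2)/a^2) by (field; lra).
 apply Rmult_le_reg_r with (sin a ^2 * a^2). nra. assert (sin a <> 0) by (intro Hz; rewrite Hz in H6; simpl in H6; lra). field_simplify; try lra. nra. Qed.
Lemma one_minus_cos_le t : 1 - cos t <= t^2/2.
Proof. replace t with (2 * (t/2)) at 1 by field. rewrite cos_2a_sin.
 generalize (sin2_le (t/2)); intro. simpl in H. nra. Qed.

Fixpoint sm (f : nat -> R) (n : nat) : R := match n with O => 0 | S n' => sm f n' + f n' end.
Lemma sm_ext f g n : (forall k, (k < n)%nat -> f k = g k) -> sm f n = sm g n.
Proof. induction n; simpl; intros; auto. rewrite IHn by (intros; apply H; lia). rewrite H by lia. auto. Qed.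
Lemma sm_plus f g n : sm (fun k => f k + g k) n = sm f n + sm g n.
Proof. induction n; simpl; [ring|rewrite IHn; ring]. Qed.
Lemma sm_scal a f n : sm (fun k => a * f k) n = a * sm f n.
Proof. induction n; simpl; [ring|rewrite IHn; ring]. Qed.
Lemma sm_const c n : sm (fun _ => c) n = INR n * c.
Proof. induction n; simpl sm; [simpl; ring|rewrite IHn, S_INR; ring]. Qed.
Lemma sm_zero f n : (forall k, (k < n)%nat -> f k = 0) -> sm f n = 0.
Proof. intros. rewrite (sm_ext f (fun _ => 0)) by auto. rewrite sm_const; ring. Qed.
Lemma sm_shift f n : sm f (S n) = f O + sm (fun k => f (S k)) n.
Proof. induction n. simpl; ring. change (sm f (S (S n))) with (sm f (S n) + f (S n)). rewrite IHn. simpl; ring. Qed.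
Lemma sm_tele F n : sm (fun k => F (S k) - F k) n = F n - F O.
Proof. induction n; simpl; [ring|rewrite IHn; ring]. Qed.
Lemma sm_swap (f : nat -> nat -> R) N n :
  sm (fun k => sm (fun j => f k j) n) N = sm (fun j => sm (fun k => f k j) N) n.
Proof. induction n; simpl. apply sm_zero; auto. rewrite sm_plus, IHn. auto. Qed.
Lemma sum_f_sm f n : sum_f_R0 f n = sm f (S n).
Proof. induction n; simpl; [ring|]. rewrite IHn. simpl. ring. Qed.

Lemma prod_sc u v : 2 * sin u * cos v = sin (v + u) - sin (v - u).
Proof. rewrite sin_plus, sin_minus. ring. Qed.
Lemma prod_ss u v : 2 * sin u * sin v = cos (v - u) - cos (v + u).
Proof. rewrite cos_plus, cos_minus. ring. Qed.

Lemma cos_sum_zero (N j : nat) (A : R) : (1 <= j < N)%nat ->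
  sm (fun k => cos (A + INR k * (2 * PI * INR j / INR N))) N = 0.
Proof. intros. set (b := 2 * PI * INR j / INR N).
 assert (HN : 0 < INR N) by (apply lt_0_INR; lia).
 assert (Hj : 0 < INR j) by (apply lt_0_INR; lia).
 assert (HjN : INR j < INR N) by (apply lt_INR; lia).
 assert (Hs : 0 < sin (b/2)). { apply sin_gt_0; unfold b.
   - apply Rmult_lt_0_compat; [|lra]. apply Rmult_lt_0_compat; [|apply Rinv_0_lt_compat; lra]. generalize PI_RGT_0; nra.
   - replace (2 * PI * INR j / INR N / 2) with (PI * (INR j / INR N)) by (field; lra).
     assert (INR j / INR N < 1) by (apply Rmult_lt_reg_r with (INR N); [lra|]; field_simplify; lra).
     generalize PI_RGT_0; nra. }
 set (F := fun k => sin (A + INR k * b - b/2)).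
 assert (E: sm (fun k => 2 * sin (b/2) * cos (A + INR k * b)) N = F N - F O).
 { rewrite <- sm_tele. apply sm_ext. intros k _. unfold F. rewrite prod_sc, S_INR. cbv beta. replace (A + (INR k + 1) * b - b / 2) with (A + INR k * b + b / 2) by lra. reflexivity. }
 rewrite sm_scal in E.
 assert (F N = F O). { unfold F. simpl INR. replace (A + INR N * b - b/2) with ((A + 0 * b - b/2) + 2 * INR j * PI).
   apply sin_period. unfold b. field. lra. }
 assert (2 * sin (b/2) <> 0) by lra.
 apply Rmult_eq_reg_l with (2 * sin (b/2)); auto. rewrite E. lra. Qed.

Definition Dir (phi : R) (n : nat) : R := 1 + 2 * sm (fun j => cos (2 * (INR j + 1) * phi)) n.

Lemma dir_sin phi n : sin phi * Dir phi n = sin ((2 * INR n + 1) * phi).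
Proof. unfold Dir. induction n. simpl. replace ((2 * 0 + 1) * phi) with phi by ring. ring.
 simpl sm. replace (sin phi * (1 + 2 * (sm (fun j => cos (2 * (INR j + 1) * phi)) n + cos (2 * (INR n + 1) * phi))))
 with (sin phi * (1 + 2 * sm (fun j => cos (2 * (INR j + 1) * phi)) n) + 2 * sin phi * cos (2 * (INR n + 1) * phi)) by ring.
 rewrite IHn, prod_sc, S_INR. replace (2 * (INR n + 1) * phi - phi) with ((2 * INR n + 1) * phi) by ring.
 replace (2 * (INR n + 1) * phi + phi) with ((2 * (INR n + 1) + 1) * phi) by ring. ring. Qed.

Lemma fejer_pt phi N : sin (INR N * phi) ^ 2 = sin phi ^ 2 * sm (fun n => Dir phi n) N.
Proof. rewrite <- sm_scal.
 rewrite (sm_ext _ (fun n => (cos (2 * INR n * phi) - cos (2 * INR (S n) * phi)) / 2)).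
 - replace (sm (fun n => (cos (2 * INR n * phi) - cos (2 * INR (S n) * phi)) / 2) N)
   with ((-1/2) * sm (fun n => cos (2 * INR (S n) * phi) - cos (2 * INR n * phi)) N).
   rewrite (sm_tele (fun n => cos (2 * INR n * phi))). simpl INR.
   replace (2 * 0 * phi) with 0 by ring. rewrite cos_0.
   replace (2 * INR N * phi) with (2 * (INR N * phi)) by ring. rewrite cos_2a_sin. field.
   rewrite <- sm_scal. apply sm_ext. intros. field.
 - intros. replace (sin phi ^2 * Dir phi k) with (sin phi * (sin phi * Dir phi k)) by ring.
   rewrite dir_sin. replace (sin phi * sin ((2 * INR k + 1) * phi)) with ((2 * sin phi * sin ((2 * INR k + 1) * phi))/2) by field.
   rewrite prod_ss, S_INR. f_equal. f_equal; f_equal; ring. Qed.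

Lemma fejer (N : nat) (a : R) : (1 <= N)%nat ->
  (forall k, (k < N)%nat -> sin (a + INR k * (PI / INR N)) <> 0) ->
  sm (fun k => sin (INR N * (a + INR k * (PI / INR N))) ^ 2 / sin (a + INR k * (PI / INR N)) ^ 2) N = INR N ^ 2.
Proof. intros HN Hs.
 assert (HN' : 0 < INR N) by (apply lt_0_INR; lia).
 rewrite (sm_ext _ (fun k => sm (fun n => Dir (a + INR k * (PI / INR N)) n) N)).
 2:{ intros. rewrite fejer_pt. field. apply Hs; auto. }
 rewrite sm_swap. unfold Dir.
 rewrite (sm_ext _ (fun n => INR N)). rewrite sm_const. ring.
 intros n Hn. rewrite sm_plus, sm_const, sm_scal, sm_swap.
 rewrite (sm_zero (fun j => sm _ N)). ring.
 intros j Hj. rewrite <- (cos_sum_zero N (S j) (2 * (INR j + 1) * a)) by lia.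
 apply sm_ext. intros k _. f_equal. rewrite S_INR. field. lra. Qed.

Fixpoint symS (g : R -> R) (n : nat) : R :=
  match n with O => g 0 | S n' => symS g n' + g (INR n) + g (- INR n) end.
Lemma sm_sym g B : sm (fun k => g (INR k - INR B)) (2 * B + 1) = symS g B.
Proof. revert g. induction B; intro g.
 - simpl. replace (0 - 0) with 0 by ring. ring.
 - replace (2 * S B + 1)%nat with (S (S (2 * B + 1))) by lia.
   rewrite sm_shift. cbn [sm].
   rewrite (sm_ext _ (fun k => g (INR k - INR B))).
   2:{ intros. rewrite !S_INR. f_equal. ring. }
   rewrite IHB. change (symS g (S B)) with (symS g B + g (INR (S B)) + g (- INR (S B))). replace (INR 0 - INR (S B)) with (- INR (S B)) by (simpl; ring).
   replace (INR (S (2 * B + 1)) - INR (S B)) with (INR (S B)).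
   ring. rewrite !S_INR, plus_INR, mult_INR. simpl. ring. Qed.
Lemma symS_le g h n : (forall i, (i <= n)%nat -> g (INR i) <= h (INR i) /\ g (- INR i) <= h (- INR i)) ->
  symS g n <= symS h n.
Proof. induction n; intros. simpl. apply (H O); lia.
 cbn [symS]. destruct (H (S n)) as [H1 H2]; auto. assert (symS g n <= symS h n) by (apply IHn; intros; apply H; lia). lra. Qed.
Lemma symS_lin g a c n : symS (fun y => a * g y + c) n = a * symS g n + (2 * INR n + 1) * c.
Proof. induction n. simpl. ring. cbn [symS]. rewrite IHn. rewrite S_INR. ring. Qed.

Lemma sin_shift_nat y i : sin (y + INR i * PI) ^ 2 = sin y ^ 2.
Proof. induction i. simpl. replace (y + 0 * PI) with y by ring. auto.
 rewrite S_INR. replace (y + (INR i + 1) * PI) with ((y + INR i * PI) + PI) by ring. rewrite neg_sin.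
 rewrite <- IHi. ring. Qed.

Definition isint (n : nat) (y : R) := exists i, (i <= n)%nat /\ (y = INR i \/ y = - INR i).

Lemma isint_km M k : (k <= 2 * M)%nat -> isint M (INR k - INR M).
Proof. intros. destruct (Compare_dec.le_lt_dec M k).
 - exists (k - M)%nat. split. lia. left. rewrite minus_INR by lia. ring.
 - exists (M - k)%nat. split. lia. right. rewrite minus_INR by lia. ring. Qed.

Lemma isint_sin n y x : isint n y -> sin (PI * (x + y)) ^ 2 = sin (PI * x) ^ 2.
Proof. intros [i [_ [H|H]]]; subst.
 - replace (PI * (x + INR i)) with (PI * x + INR i * PI) by ring. apply sin_shift_nat.
 - rewrite <- (sin_shift_nat (PI * (x + - INR i)) i). f_equal. f_equal. ring. Qed.

Lemma isint_abs n y x : isint n y -> -1/2 < x <= 1/2 -> x <> 0 ->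
  0 < Rabs (x + y) <= INR n + 1/2.
Proof. intros [i [Hi [H|H]]] Hx Hx0; subst; assert (INR i <= INR n) by (apply le_INR; auto);
 destruct (Nat.eq_dec i 0); try subst i.
 - simpl INR in *. replace (x+0) with x by ring. split. apply Rabs_pos_lt; auto. apply Rabs_le; lra.
 - assert (1 <= INR i) by (apply (le_INR 1); lia). rewrite Rabs_right by lra. lra.
 - simpl INR in *. replace (x + - 0) with x by ring. split. apply Rabs_pos_lt; auto. apply Rabs_le; lra.
 - assert (1 <= INR i) by (apply (le_INR 1); lia). rewrite Rabs_left by lra. lra. Qed.

Lemma isint_lower n y x : isint n y -> -1/2 < x <= 1/2 -> Rabs (x + y) >= Rabs y - 1/2.
Proof. intros [i [Hi [H|H]]] Hx; subst; generalize (pos_INR i); intro.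
 - rewrite (Rabs_right (INR i)) by lra. unfold Rabs; destruct Rcase_abs; lra.
 - rewrite Rabs_Ropp, (Rabs_right (INR i)) by lra. unfold Rabs; destruct Rcase_abs; lra. Qed.

Lemma symS_le' g h n : (forall y, isint n y -> g y <= h y) -> symS g n <= symS h n.
Proof. intros. apply symS_le. intros; split; apply H; exists i; auto. Qed.

Definition gfun x y := sin (PI * x) ^ 2 / (PI ^ 2 * (x + y) ^ 2).

Lemma sin_nz u : 0 < Rabs u -> Rabs u <= PI / 2 -> sin u <> 0.
Proof. intros. generalize PI_RGT_0; intro. destruct (Rle_lt_dec 0 u).
 - rewrite Rabs_right in * by lra. assert (0 < sin u) by (apply sin_gt_0; lra). lra.
 - rewrite Rabs_left in * by lra. assert (0 < sin (-u)) by (apply sin_gt_0; lra). rewrite sin_neg in H2. lra. Qed.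

Lemma window_lower x M : -1/2 < x <= 1/2 -> x <> 0 ->
  symS (gfun x) M >= 1 - 10 / INR (2 * M + 1).
Proof. intros Hx Hx0. set (N := (2 * M + 1)%nat).
 assert (HN : 0 < INR N) by (apply lt_0_INR; unfold N; lia).
 assert (HNM : INR N = 2 * INR M + 1) by (unfold N; rewrite plus_INR, mult_INR; simpl; ring).
 generalize PI_RGT_0; intro HPI.
 set (a := PI * (x - INR M) / INR N).
 assert (Hu : forall k, (k < N)%nat -> a + INR k * (PI / INR N) = PI * (x + (INR k - INR M)) / INR N).
 { intros. unfold a. field. lra. }
 assert (Hk : forall y, isint M y -> 0 < Rabs (PI * (x + y) / INR N) <= PI / 2).
 { intros. destruct (isint_abs M y x H Hx Hx0).
   replace (PI * (x + y) / INR N) with ((PI / INR N) * (x + y)) by (field; lra).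
   rewrite Rabs_mult, (Rabs_right (PI / INR N)). 2:{ apply Rle_ge, Rlt_le, Rdiv_lt_0_compat; lra. }
   split. apply Rmult_lt_0_compat; auto. apply Rdiv_lt_0_compat; lra.
   apply Rmult_le_reg_r with (INR N); auto. field_simplify; try lra.
   replace (PI * Rabs (x + y) * INR N / INR N) with (PI * Rabs (x + y)) by (field; lra).
   rewrite HNM. nra. }
 assert (Hkint : forall k, (k < N)%nat -> isint M (INR k - INR M)) by (intros; apply isint_km; unfold N in *; lia).
 assert (F := fejer N a ltac:(unfold N; lia)
   ltac:(intros; rewrite Hu by auto; destruct (Hk _ (Hkint k H)); apply sin_nz; auto)).
 set (h := fun y => sin (PI * x) ^ 2 / sin (PI * (x + y) / INR N) ^ 2).
 assert (E : sm (fun k => h (INR k - INR M)) N = INR N ^ 2).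
 { rewrite <- F. apply sm_ext. intros. rewrite Hu by auto. unfold h.
   replace (INR N * (PI*(x+(INR k - INR M))/INR N)) with (PI*(x + (INR k - INR M))) by (field; lra).
   rewrite (isint_sin M) by auto. reflexivity. }
 rewrite sm_sym in E.
 assert (Hle : symS h M <= symS (fun y => INR N ^ 2 * gfun x y + 10) M).
 { apply symS_le'. intros y Hy. destruct (Hk y Hy) as [H1 H2].
   generalize (inv_sin2 _ H1 H2); intro Hb.
   assert (0 <= sin (PI * x) ^ 2 <= 1) by (generalize (SIN_bound (PI * x)); intro; simpl; nra).
   unfold h, gfun. set (u := PI * (x + y) / INR N) in *.
   assert (sin (PI*x)^2 / sin u ^ 2 <= sin (PI*x)^2 * (1 / u^2 + 10)).
   { replace (sin (PI*x)^2 / sin u ^ 2) with (sin (PI*x)^2 * (1 / sin u ^ 2)) by (unfold Rdiv; ring).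
     apply Rmult_le_compat_l; lra. }
   assert (x + y <> 0) by (destruct (isint_abs M y x Hy Hx Hx0) as [Ha _]; intro Hz; rewrite Hz, Rabs_R0 in Ha; lra).
   replace (INR N ^ 2 * (sin (PI * x) ^ 2 / (PI ^ 2 * (x + y) ^ 2))) with (sin (PI*x)^2 / u^2).
   nra. unfold u. field. split; lra. }
 rewrite symS_lin, E in Hle. rewrite <- HNM in Hle.
 apply Rle_ge. apply Rmult_le_reg_r with (INR N ^ 2). nra.
 replace ((1 - 10 / INR N) * INR N ^ 2) with (INR N ^ 2 - INR N * 10) by (field; lra). lra. Qed.

Lemma g_tail x n y : -1/2 < x <= 1/2 -> (1 <= n)%nat -> (y = INR (S n) \/ y = - INR (S n)) ->
  gfun x y <= 1 / PI ^ 2 * (1 / INR n - 1 / INR (S n)).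
Proof. intros Hx Hn Hy.
 assert (Hi : isint (S n) y) by (exists (S n); split; auto).
 generalize (isint_lower _ _ _ Hi Hx); intro Hl.
 assert (Ry : Rabs y = INR n + 1) by (rewrite S_INR in Hy; generalize (pos_INR n); intro;
   destruct Hy; subst; [rewrite Rabs_right|rewrite Rabs_Ropp, Rabs_right]; lra).
 assert (1 <= INR n) by (apply (le_INR 1); auto).
 assert (Hsq : (x + y)^2 >= INR n * (INR n + 1)).
 { rewrite <- pow2_abs. assert (Rabs (x+y) >= INR n + 1/2) by lra. nra. }
 generalize PI_RGT_0; intro. assert (0 < PI^2) by nra.
 assert (0 <= sin (PI * x) ^ 2 <= 1) by (generalize (SIN_bound (PI * x)); intro; simpl; nra).
 unfold gfun. rewrite S_INR.
 replace (1 / PI ^ 2 * (1 / INR n - 1 / (INR n + 1))) with (1 / (PI^2 * (INR n * (INR n + 1)))) by (field; lra).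
 assert (0 < PI^2 * (INR n * (INR n + 1))) by nra.
 assert (PI^2 * (INR n * (INR n + 1)) <= PI ^ 2 * (x + y) ^ 2) by nra.
 unfold Rdiv. apply Rle_trans with (1 * / (PI ^ 2 * (x + y) ^ 2)).
 apply Rmult_le_compat_r. apply Rlt_le, Rinv_0_lt_compat; lra. lra.
 apply Rmult_le_compat_l. lra. apply Rinv_le_contravar; lra. Qed.

Lemma tail x B d : (1 <= B)%nat -> -1/2 < x <= 1/2 ->
  symS (gfun x) (B + d) <= symS (gfun x) B + 2 / PI ^ 2 * (1 / INR B - 1 / INR (B + d)).
Proof. intros HB Hx. induction d.
 - rewrite Nat.add_0_r. lra.
 - replace (B + S d)%nat with (S (B + d)) by lia. cbn [symS].
   assert (H1 := g_tail x (B+d) (INR (S (B+d))) Hx ltac:(lia) (or_introl eq_refl)).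
   assert (H2 := g_tail x (B+d) (- INR (S (B+d))) Hx ltac:(lia) (or_intror eq_refl)).
   lra. Qed.

Lemma W_lower x B : (1 <= B)%nat -> -1/2 < x <= 1/2 -> x <> 0 ->
  symS (gfun x) B >= 1 - 2 / (PI ^ 2 * INR B).
Proof. intros HB Hx Hx0.
 assert (HBp : 1 <= INR B) by (apply (le_INR 1); auto).
 generalize PI_RGT_0; intro. assert (0 < PI^2) by nra.
 assert (Hall : forall d, symS (gfun x) B + 2 / (PI ^ 2 * INR B) >= 1 - 10 / INR (2 * (B + d) + 1)).
 { intro d. generalize (window_lower x (B + d) Hx Hx0) (tail x B d HB Hx); intros.
   assert (0 < INR (B + d)) by (apply lt_0_INR; lia).
   assert (0 <= 2 / PI ^ 2 * (1 / INR (B + d))).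
   { apply Rmult_le_pos; apply Rlt_le; apply Rdiv_lt_0_compat; lra. }
   replace (2 / (PI ^ 2 * INR B)) with (2 / PI ^ 2 * (1 / INR B)) by (field; lra). lra. }
 apply Rnot_lt_ge. intro Hc.
 set (e := 1 - 2 / (PI ^ 2 * INR B) - symS (gfun x) B).
 assert (He : 0 < e) by (unfold e; lra).
 destruct (archimed (10 / e)) as [Hup _].
 set (d := Z.to_nat (up (10 / e))).
 assert (Hd : 10 / e < INR d).
 { unfold d. rewrite INR_IZR_INZ. rewrite Z2Nat.id. lra.
   apply le_IZR. assert (0 < 10 / e) by (apply Rdiv_lt_0_compat; lra). lra. }
 specialize (Hall d).
 assert (HN : INR d < INR (2 * (B + d) + 1)) by (apply lt_INR; lia).
 assert (0 < INR d) by (assert (0 < 10/e) by (apply Rdiv_lt_0_compat; lra); lra).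
 assert (H10 : 10 < e * INR d).
 { replace 10 with (10 / e * e) by (field; lra). nra. }
 assert (10 / INR (2 * (B + d) + 1) < e).
 { apply Rmult_lt_reg_r with (INR (2 * (B + d) + 1)). lra.
   replace (10 / INR (2 * (B + d) + 1) * INR (2 * (B + d) + 1)) with 10 by (field; lra). nra. }
 unfold e in *. lra. Qed.

Lemma div_ge_lower X D U : 0 <= X -> 0 < D -> D <= U -> X / D >= X / U.
Proof. intros. unfold Rdiv. apply Rle_ge, Rmult_le_compat_l; auto. apply Rinv_le_contravar; auto. Qed.

Lemma core (Q L b r al : R) : 0 < r -> 0 <= b <= r -> r <= Q -> Q = L * r + b ->
  0 < Rabs al -> Rabs al < Q / 2 ->
  b / Q ^ 2 * ((1 - cos (2 * PI * al * (L + 1) / Q)) / (1 - cos (2 * PI * al / Q)))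
  + (r - b) / Q ^ 2 * ((1 - cos (2 * PI * al * L / Q)) / (1 - cos (2 * PI * al / Q)))
  >= r * sin (PI * al / r) ^ 2 / (PI ^ 2 * al ^ 2) - 3 / Q.
Proof. intros Hr Hb HrQ HQ Ha0 Ha1.
 assert (HQp : 0 < Q) by lra. generalize PI_RGT_0; intro HPI. generalize PI_4; intro HPI4.
 assert (Hal2 : 0 < al ^ 2) by (rewrite <- pow2_abs; nra).
 set (th := 2 * PI * al / Q).
 assert (Hth : Rabs (th / 2) < PI / 2 /\ 0 < Rabs (th / 2)).
 { unfold th. replace (2 * PI * al / Q / 2) with ((PI / Q) * al) by (field; lra).
   rewrite Rabs_mult, (Rabs_right (PI / Q)) by (apply Rle_ge, Rlt_le, Rdiv_lt_0_compat; lra).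
   assert (0 < PI / Q) by (apply Rdiv_lt_0_compat; lra). split; [|nra].
   apply Rmult_lt_reg_r with Q; auto. replace (PI / Q * Rabs al * Q) with (PI * Rabs al) by (field; lra). nra. }
 set (D := 1 - cos th).
 assert (HD : 0 < D).
 { unfold D. replace th with (2 * (th/2)) by field. rewrite cos_2a_sin.
   assert (sin (th/2) <> 0) by (apply sin_nz; lra). assert (0 < sin (th/2) * sin (th/2)) by nra. lra. }
 assert (HDu : D <= th ^ 2 / 2) by apply one_minus_cos_le.
 set (a1 := PI * al * (L + 1) / Q). set (a0 := PI * al * L / Q).
 assert (E1 : 1 - cos (2 * PI * al * (L + 1) / Q) = 2 * sin a1 ^ 2).
 { replace (2 * PI * al * (L + 1) / Q) with (2 * a1) by (unfold a1; field; lra). rewrite cos_2a_sin. ring. }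
 assert (E0 : 1 - cos (2 * PI * al * L / Q) = 2 * sin a0 ^ 2).
 { replace (2 * PI * al * L / Q) with (2 * a0) by (unfold a0; field; lra). rewrite cos_2a_sin. ring. }
 rewrite E1, E0. fold th. fold D.
 assert (0 <= sin a1 ^2) by (apply pow2_ge_0). assert (0 <= sin a0 ^2) by (apply pow2_ge_0).
 assert (L1 : 2 * sin a1 ^ 2 / D >= 2 * sin a1 ^ 2 / (th ^ 2 / 2)) by (apply div_ge_lower; lra).
 assert (L0 : 2 * sin a0 ^ 2 / D >= 2 * sin a0 ^ 2 / (th ^ 2 / 2)) by (apply div_ge_lower; lra).
 assert (Hbq : 0 <= b / Q ^ 2) by (apply Rmult_le_pos; [lra|apply Rlt_le, Rinv_0_lt_compat; nra]).
 assert (Hrbq : 0 <= (r - b) / Q ^ 2) by (apply Rmult_le_pos; [lra|apply Rlt_le, Rinv_0_lt_compat; nra]).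
 assert (Step1 : b / Q ^ 2 * (2 * sin a1 ^ 2 / D) + (r - b) / Q ^ 2 * (2 * sin a0 ^ 2 / D)
   >= (b * sin a1 ^ 2 + (r - b) * sin a0 ^ 2) / (PI ^ 2 * al ^ 2)).
 { replace ((b * sin a1 ^ 2 + (r - b) * sin a0 ^ 2) / (PI ^ 2 * al ^ 2)) with
     (b / Q ^ 2 * (2 * sin a1 ^ 2 / (th ^ 2 / 2)) + (r - b) / Q ^ 2 * (2 * sin a0 ^ 2 / (th ^ 2 / 2))).
   2:{ unfold th. field. split; [|split]; try lra. intro Hz; rewrite Hz in Hal2; simpl in Hal2; lra. }
   apply Rle_ge. apply Rplus_le_compat; apply Rmult_le_compat_l; auto; lra. }
 set (c := PI * al / r). set (d1 := PI * al * (r - b) / (r * Q)). set (d0 := - (PI * al * b / (r * Q))).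
 assert (Ea1 : a1 = c + d1) by (unfold a1, c, d1; rewrite HQ; field; split; lra).
 assert (Ea0 : a0 = c + d0) by (unfold a0, c, d0; rewrite HQ; field; split; lra).
 assert (Hw : b * d1 + (r - b) * d0 = 0) by (unfold d1, d0; field; split; lra).
 assert (Hpq : Rabs (PI * al / Q) < PI / 2).
 { replace (PI * al / Q) with (th / 2) by (unfold th; field; lra). lra. }
 assert (Hd1 : Rabs d1 <= PI / 2).
 { unfold d1. replace (PI * al * (r - b) / (r * Q)) with ((PI * al / Q) * ((r - b) / r)) by (field; split; lra).
   rewrite Rabs_mult. rewrite (Rabs_right ((r - b) / r)).
   2:{ apply Rle_ge, Rmult_le_pos; [lra|apply Rlt_le, Rinv_0_lt_compat; lra]. }
   assert ((r - b) / r <= 1). { apply Rmult_le_reg_r with r; auto. field_simplify; lra. }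
   assert (0 <= (r - b) / r) by (apply Rmult_le_pos; [lra|apply Rlt_le, Rinv_0_lt_compat; lra]).
   generalize (Rabs_pos (PI * al / Q)); intro. nra. }
 assert (Hd0 : Rabs d0 <= PI / 2).
 { unfold d0. rewrite Rabs_Ropp. replace (PI * al * b / (r * Q)) with ((PI * al / Q) * (b / r)) by (field; split; lra).
   rewrite Rabs_mult. rewrite (Rabs_right (b / r)).
   2:{ apply Rle_ge, Rmult_le_pos; [lra|apply Rlt_le, Rinv_0_lt_compat; lra]. }
   assert (b / r <= 1). { apply Rmult_le_reg_r with r; auto. field_simplify; lra. }
   assert (0 <= b / r) by (apply Rmult_le_pos; [lra|apply Rlt_le, Rinv_0_lt_compat; lra]).
   generalize (Rabs_pos (PI * al / Q)); intro. nra. }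
 generalize (sin2_shift c d1 Hd1) (sin2_shift c d0 Hd0); intros S1 S0.
 rewrite <- Ea1 in S1. rewrite <- Ea0 in S0.
 assert (Wt : b * sin a1 ^ 2 + (r - b) * sin a0 ^ 2 >= r * sin c ^ 2 - 3 * (b * d1 ^ 2 + (r - b) * d0 ^ 2)).
 { assert (b * sin a1 ^ 2 >= b * (sin c ^ 2 + sin (2 * c) * d1 - 3 * d1 ^ 2)) by (apply Rle_ge, Rmult_le_compat_l; lra).
   assert ((r - b) * sin a0 ^ 2 >= (r - b) * (sin c ^ 2 + sin (2 * c) * d0 - 3 * d0 ^ 2)) by (apply Rle_ge, Rmult_le_compat_l; lra).
   assert (sin (2 * c) * (b * d1 + (r - b) * d0) = 0) by (rewrite Hw; ring).
   assert (b * (sin c ^ 2 + sin (2 * c) * d1 - 3 * d1 ^ 2) + (r - b) * (sin c ^ 2 + sin (2 * c) * d0 - 3 * d0 ^ 2)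
     = r * sin c ^ 2 + sin (2 * c) * (b * d1 + (r - b) * d0) - 3 * (b * d1 ^ 2 + (r - b) * d0 ^ 2)) by ring.
   lra. }
 assert (Esq : b * d1 ^ 2 + (r - b) * d0 ^ 2 = PI ^ 2 * al ^ 2 * (b * (r - b) / (r * Q ^ 2))).
 { unfold d1, d0. field. split; lra. }
 rewrite Esq in Wt.
 assert (Hbr : b * (r - b) / (r * Q ^ 2) <= 1 / Q).
 { replace (1 / Q) with ((r * Q) / (r * Q ^ 2)) by (field; lra).
   unfold Rdiv. apply Rmult_le_compat_r. apply Rlt_le, Rinv_0_lt_compat. apply Rmult_lt_0_compat; [lra|apply pow_lt; lra].
   assert (b * (r - b) <= r * r) by nra. assert (r * r <= r * Q) by (apply Rmult_le_compat_l; lra). lra. }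
 assert (Step2 : (b * sin a1 ^ 2 + (r - b) * sin a0 ^ 2) / (PI ^ 2 * al ^ 2)
    >= r * sin c ^ 2 / (PI ^ 2 * al ^ 2) - 3 * (b * (r - b) / (r * Q ^ 2))).
 { assert (0 < PI ^ 2 * al ^ 2) by (apply Rmult_lt_0_compat; [apply pow_lt|]; lra).
   replace (r * sin c ^ 2 / (PI ^ 2 * al ^ 2) - 3 * (b * (r - b) / (r * Q ^ 2))) with
     ((r * sin c ^ 2 - 3 * (PI ^ 2 * al ^ 2 * (b * (r - b) / (r * Q ^ 2)))) / (PI ^ 2 * al ^ 2)) by (field; repeat split; try lra; intro Hz; rewrite Hz, Rabs_R0 in Ha0; lra).
   unfold Rdiv at 1 3. apply Rle_ge, Rmult_le_compat_r. apply Rlt_le, Rinv_0_lt_compat; lra. lra. }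
 lra. Qed.


Lemma div_nonneg X D : 0 <= X -> 0 <= D -> 0 <= X / D.
Proof. intros. destruct (Req_dec D 0). subst. unfold Rdiv. rewrite Rinv_0. lra.
 apply Rmult_le_pos; auto. apply Rlt_le, Rinv_0_lt_compat; lra. Qed.

Lemma Qn_pos m l : 0 < Qn m l.
Proof. unfold Qn. apply pow_lt. lra. Qed.

Lemma P_nonneg r m l al : (1 <= r)%nat -> 0 <= P r m l al.
Proof. intro Hr1. generalize (Qn_pos m l); intro HQ.
 assert (0 < Qn m l ^ 2) by (apply pow_lt; lra).
 assert (Hb : (betan r m l <= r)%nat \/ r = O).
 { destruct r. right; auto. left. unfold betan. generalize (Nat.mod_upper_bound (2 ^ (m + l)) (S r)); lia. }
 unfold P. destruct excluded_middle_informative.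
 - apply div_nonneg; [|lra]. generalize (pos_INR (Ln r m l)) (pos_INR (betan r m l)) (pos_INR r); intros. nra.
 - assert (0 <= INR r - INR (betan r m l)).
   { destruct Hb as [Hb|Hb]. apply le_INR in Hb; lra. lia. }
   generalize (pos_INR (betan r m l)); intro.
   apply Rplus_le_le_0_compat; apply Rmult_le_pos; try (apply div_nonneg; lra);
   apply div_nonneg; generalize (COS_bound (2 * PI * al * (INR (Ln r m l) + 1) / Qn m l))
    (COS_bound (2 * PI * al * INR (Ln r m l) / Qn m l)) (COS_bound (2 * PI * al / Qn m l)); intros; lra. Qed.

Lemma symS_ge0 g n : (forall y, 0 <= g y) -> symS g n >= g 0.
Proof. intros. induction n. simpl; lra. cbn [symS]. generalize (H (INR (S n))) (H (- INR (S n))); intros. lra. Qed.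

Lemma sum_to_sym g B : sum_f_R0 (fun k => g (INR k - INR B)) (2 * B) = symS g B.
Proof. rewrite sum_f_sm. replace (S (2 * B)) with (2 * B + 1)%nat by lia. apply sm_sym. Qed.

Lemma IZR_small k : Rabs (IZR k) < 1 -> k = 0%Z.
Proof. intros. apply Rabs_def2 in H. destruct H. assert (IZR (-1) < IZR k) by (simpl; lra). assert (IZR k < IZR 1) by (simpl; lra). apply lt_IZR in H1. apply lt_IZR in H2. lia. Qed.

Theorem theorem2 (r m l : nat) (alpha0 : R) (B : nat)
  (hr : (2 <= r)%nat) (hm : (1 <= m)%nat) (hl : (1 <= l)%nat)
  (hrm : (r < Nat.pow 2 m)%nat)
  (ha1 : - INR r / 2 < alpha0) (ha2 : alpha0 <= INR r / 2)
  (hB1 : (1 <= B)%nat) (hB2 : INR B < (Qn m l / INR r - 1) / 2) :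
  sum_f_R0 (fun k => P r m l (alpha0 + INR r * (INR k - INR B))) (2 * B)
  >= 1 / INR r * (1 - 1 / PI ^ 2 * (2 / INR B + 1 / INR B ^ 2 + 1 / (3 * INR B ^ 3)))
     - PI ^ 2 * (2 * INR B + 1) / Qn m l.
Proof.
 rewrite (sum_to_sym (fun y => P r m l (alpha0 + INR r * y))).
 set (Q := Qn m l). set (b := INR (betan r m l)). set (L := INR (Ln r m l)).
 assert (HQp : 0 < Q) by apply Qn_pos.
 assert (HQN : Q = INR (2 ^ (m + l))) by (unfold Q, Qn; rewrite pow_INR; simpl; auto).
 assert (Hrp : 2 <= INR r) by (apply (le_INR 2); auto).
 assert (HQ : Q = L * INR r + b).
 { rewrite HQN. unfold L, b, Ln, betan. rewrite (Nat.div_mod_eq (2 ^ (m + l)) r) at 1.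
   rewrite plus_INR, mult_INR. ring. }
 assert (Hb : 0 <= b < INR r).
 { unfold b. split. apply pos_INR. apply lt_INR. unfold betan. apply Nat.mod_upper_bound. lia. }
 assert (HrQ : INR r <= Q).
 { rewrite HQN. apply le_INR. apply Nat.lt_le_incl. apply Nat.lt_le_trans with (2 ^ m)%nat; auto.
   apply Nat.pow_le_mono_r; lia. }
 generalize PI_RGT_0 PI_gt3; intros HPI HPI3.
 assert (HBp : 1 <= INR B) by (apply (le_INR 1); auto).
 assert (HRHS1 : 0 <= 1 / PI ^ 2 * (2 / INR B + 1 / INR B ^ 2 + 1 / (3 * INR B ^ 3))).
 { apply Rmult_le_pos. apply div_nonneg; [lra|apply pow2_ge_0].
   assert (0 < INR B ^ 2) by (apply pow_lt; lra). assert (0 < INR B ^ 3) by (apply pow_lt; lra).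
   apply Rplus_le_le_0_compat; [apply Rplus_le_le_0_compat|]; apply div_nonneg; lra. }
 assert (HRHS2 : 0 <= PI ^ 2 * (2 * INR B + 1) / Q).
 { apply div_nonneg; [|lra]. apply Rmult_le_pos; [apply pow2_ge_0|lra]. }
 destruct (Req_dec alpha0 0) as [H0|H0].
 -
   assert (Hs := symS_ge0 (fun y => P r m l (alpha0 + INR r * y)) B ltac:(intros; apply P_nonneg; lia)).
   cbv beta in Hs. replace (alpha0 + INR r * 0) with 0 in Hs by (rewrite H0; ring).
   assert (HP0 : P r m l 0 >= 1 / INR r).
   { unfold P. destruct excluded_middle_informative as [_|n].
     2:{ exfalso. apply n. exists 0%Z. simpl. ring. }
     fold Q b L. assert (0 < Q ^ 2) by (apply pow_lt; lra).
     apply Rle_ge. apply Rmult_le_reg_r with (INR r * Q ^ 2). nra.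
     replace (1 / INR r * (INR r * Q ^ 2)) with (Q ^ 2) by (field; lra).
     replace ((L ^ 2 * INR r + (2 * L + 1) * b) / Q ^ 2 * (INR r * Q ^ 2)) with ((L ^ 2 * INR r + (2 * L + 1) * b) * INR r) by (field; lra).
     rewrite HQ. nra. }
   assert (1 / INR r * (1 - 1 / PI ^ 2 * (2 / INR B + 1 / INR B ^ 2 + 1 / (3 * INR B ^ 3))) <= 1 / INR r).
   { assert (0 < 1 / INR r) by (apply Rdiv_lt_0_compat; lra). nra. }
   lra.
 -
   set (x := alpha0 / INR r).
   assert (Hx : -1/2 < x <= 1/2).
   { unfold x. split; [apply Rmult_lt_reg_r with (INR r)|apply Rmult_le_reg_r with (INR r)]; try lra;
     field_simplify; lra. }
   assert (Hx0 : x <> 0). { unfold x. intro Hz. apply H0. apply Rmult_eq_reg_r with (/ INR r).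
     rewrite Rmult_0_l. auto. apply Rinv_neq_0_compat; lra. }
   assert (Hterm : forall y, isint B y -> P r m l (alpha0 + INR r * y) >= / INR r * gfun x y + - (3 / Q)).
   { intros y Hy. destruct (isint_abs B y x Hy Hx Hx0) as [Hy1 Hy2].
     set (al := alpha0 + INR r * y).
     assert (Hal : al = INR r * (x + y)) by (unfold al, x; field; lra).
     assert (Hal1 : 0 < Rabs al) by (rewrite Hal, Rabs_mult, Rabs_right; nra).
     assert (Hal2 : Rabs al < Q / 2).
     { rewrite Hal, Rabs_mult, Rabs_right by lra.
       assert (INR r * (2 * INR B + 1) < Q).
       { apply Rmult_lt_reg_r with (/ INR r). apply Rinv_0_lt_compat; lra.
         replace (INR r * (2 * INR B + 1) * / INR r) with (2 * INR B + 1) by (field; lra).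
         fold Q in hB2. unfold Rdiv in hB2. lra. }
       nra. }
     unfold P. destruct excluded_middle_informative as [Hm|Hm].
     { exfalso. destruct Hm as [k Hk]. fold Q in Hk.
       assert (k = 0%Z). { apply IZR_small. apply Rmult_lt_reg_r with Q; auto.
         rewrite <- (Rabs_right Q) at 1 by lra. rewrite <- Rabs_mult, <- Hk. fold al. lra. }
       subst k. simpl in Hk. fold al in Hk. rewrite Hk in Hal1. rewrite Rmult_0_l, Rabs_R0 in Hal1. lra. }
     fold Q b L al.
     assert (C := core Q L b (INR r) al ltac:(lra) ltac:(lra) HrQ HQ Hal1 Hal2).
     replace (INR r * sin (PI * al / INR r) ^ 2 / (PI ^ 2 * al ^ 2)) with (/ INR r * gfun x y) in C. lra.
     unfold gfun. replace (PI * al / INR r) with (PI * (x + y)) by (rewrite Hal; field; lra).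
     rewrite (isint_sin B y x Hy). rewrite Hal.
     assert (x + y <> 0) by (intro Hz; rewrite Hz, Rabs_R0 in Hy1; lra).
     field. repeat split; lra. }
   assert (Hsum : symS (fun y => P r m l (alpha0 + INR r * y)) B >=
                  symS (fun y => / INR r * gfun x y + - (3 / Q)) B).
   { apply Rle_ge. apply symS_le'. intros. apply Rge_le. apply Hterm; auto. }
   rewrite symS_lin in Hsum.
   assert (W := W_lower x B hB1 Hx Hx0).
   assert (0 < / INR r) by (apply Rinv_0_lt_compat; lra).
   assert (A1 : / INR r * symS (gfun x) B >= / INR r * (1 - 2 / (PI ^ 2 * INR B))).
   { apply Rle_ge, Rmult_le_compat_l; lra. }
   assert (A2 : 2 / (PI ^ 2 * INR B) <= 1 / PI ^ 2 * (2 / INR B + 1 / INR B ^ 2 + 1 / (3 * INR B ^ 3))).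
   { assert (0 < INR B ^ 2) by (apply pow_lt; lra). assert (0 < INR B ^ 3) by (apply pow_lt; lra).
     assert (0 <= 1 / INR B ^ 2 + 1 / (3 * INR B ^ 3)) by (apply Rplus_le_le_0_compat; apply div_nonneg; lra).
     assert (0 < PI ^ 2) by (apply pow_lt; lra).
     replace (2 / (PI ^ 2 * INR B)) with (1 / PI ^ 2 * (2 / INR B)) by (field; lra).
     apply Rmult_le_compat_l. apply div_nonneg; lra. lra. }
   assert (A3 : (2 * INR B + 1) * (3 / Q) <= PI ^ 2 * (2 * INR B + 1) / Q).
   { unfold Rdiv. assert (0 < / Q) by (apply Rinv_0_lt_compat; lra).
     assert (9 <= PI ^ 2) by nra. nra. }
   assert (A4 : / INR r * (1 - 2 / (PI ^ 2 * INR B)) >= 1 / INR r * (1 - 1 / PI ^ 2 * (2 / INR B + 1 / INR B ^ 2 + 1 / (3 * INR B ^ 3)))).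
   { replace (1 / INR r) with (/ INR r) by (unfold Rdiv; ring). apply Rle_ge, Rmult_le_compat_l; lra. }
   lra.
Qed.
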